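(* Let $\phi$ be a scoring rule, $C=(C_1,\dots,C_K)$ with $C_k:=\mathbb{E}[Q_k\mid S_k]$, $\mathrm{GL}(S):=\mathbb{E}[d_\phi(C,Q)]$, and let $h_1,\dots,h_K:[0,1]\to\mathbb{R}$ be functions such that $\mathrm{GL}(S)=\sum_{k=1}^K\mathbb{E}[\mathrm{Var}_{h_k}(Q_k\mid S_k)]$. For each $k$ let $\mathscr{R}_k:\mathcal{X}\to\mathbb{N}$ be a partition of the feature space (write $\mathscr{R}_k$ for $\mathscr{R}_k(X)$) and let $S_{B_k}$ be a binned version of $S_k$. Define, with $T_k\in\{S_k,S_{B_k}\}$ (and writing $S$ resp. $S_B$ for the two choices), $\mathrm{GL}_{\mathrm{explained}}(\cdot):=\sum_k\mathbb{E}[\mathrm{Var}_{h_k}(\mathbb{E}[Q_k\mid T_k,\mathscr{R}_k]\mid T_k)]$, $\mathrm{GL}_{\mathrm{residual}}(\cdot):=\sum_k\mathbb{E}[\mathrm{Var}_{h_k}(Q_k\mid T_k,\mathscr{R}_k)]$, and also $\mathrm{GL}(S_B):=\sum_k\mathbb{E}[\mathrm{Var}_{h_k}(Q_k\mid S_{B_k})]$, $\mathrm{GL}_{\mathrm{induced}}(S,S_B):=\sum_k\mathbb{E}[\mathrm{Var}_{h_k}(C_k\mid S_{B_k})]$. Then: (1) $\mathrm{GL}(S)=\mathrm{GL}_{\mathrm{explained}}(S)+\mathrm{GL}_{\mathrm{residual}}(S)$; (2) $\mathrm{GL}(S_B)=\mathrm{GL}(S)+\mathrm{GL}_{\mathrm{induced}}(S,S_B)$;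 (3) $\mathrm{GL}(S)=\mathrm{GL}_{\mathrm{explained}}(S_B)-\mathrm{GL}_{\mathrm{induced}}(S,S_B)+\mathrm{GL}_{\mathrm{residual}}(S_B)$. Moreover, if every $h_k$ is convex, then $\mathrm{GL}(S)\ge\mathrm{GL}_{\mathrm{explained}}(S)\ge0$, $\mathrm{GL}_{\mathrm{induced}}(S,S_B)\ge0$, and $\mathrm{GL}(S)\ge\mathrm{GL}_{\mathrm{explained}}(S_B)-\mathrm{GL}_{\mathrm{induced}}(S,S_B)$.
   Context: Let $(X,Y)$ be jointly distributed with $X\in\mathcal{X}$ and $Y\in\{e_1,\dots,e_K\}$ (one-hot vectors of $\mathbb{R}^K$); $Q_k:=P(Y=e_k\mid X)$; $S=(S_1,\dots,S_K)=f(X)$ in the probability simplex for a classifier $f$. A scoring rule $\phi$ assigns a real number $\phi(p,e_k)$ to a score vector $p$ and label $e_k$; $s_\phi(P,q):=\sum_k\phi(P,e_k)q_k$, $d_\phi(P,q):=s_\phi(P,q)-s_\phi(q,q)$. For $f:\mathbb{R}\to\mathbb{R}$ and random variables $U,V$, $\mathrm{Var}_f(U\mid V):=\mathbb{E}[f(U)\mid V]-f(\mathbb{E}[U\mid V])$. A binned version of $S_k$: given a partition of $[0,1]$ into bins $\mathcal{B}_j$, $S_{B_k}$ equals $\mathbb{E}[S_k\mid S_k\in\mathcal{B}_j]$ on $\{S_k\in\mathcal{B}_j\}$. All required expectations are assumed to exist. *)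

(* Defs.v *)
From HB Require Import structures.
From mathcomp Require Import all_boot all_order all_algebra.
From mathcomp Require Import all_classical all_reals all_analysis.
Set Implicit Arguments. Unset Strict Implicit. Unset Printing Implicit Defensive.
Import Order.TTheory GRing.Theory Num.Theory.
Local Open Scope classical_set_scope.
Local Open Scope ring_scope.

Definition sigma_of {d} {T : measurableType d} {d'} {T' : measurableType d'}
  (V : T -> T') : set (set T) :=
  preimage_set_system setT V measurable.

Definition is_cond_exp {d} {T : measurableType d} {R : realType}
  (P : probability T R) (G : set (set T)) (U W : T -> R) : Prop :=
  [/\ (forall B : set R, measurable B -> G (W @^-1` B)),
      P.-integrable setT (EFin \o W)
    & forall A, G A ->
        (\int[P]_(x in A) (W x)%:E = \int[P]_(x in A) (U x)%:E)%E ].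

(* Existence of conditional expectations of integrable variables w.r.t.
   sub-sigma-algebras (a standard theorem, not provided by the library). *)
Definition cond_exp_exist {d} {T : measurableType d} {R : realType}
  (P : probability T R) : Prop :=
  forall (G : set (set T)) (U : T -> R),
    sigma_algebra setT G -> G `<=` measurable ->
    P.-integrable setT (EFin \o U) ->
    exists W, is_cond_exp P G U W.

Definition CE {d} {T : measurableType d} {R : realType}
  (P : probability T R) (G : set (set T)) (U : T -> R) : T -> R :=
  match pselect (exists W, is_cond_exp P G U W) with
  | left h => projT1 (cid h)
  | right _ => fun _ => 0
  end.

Definition cvar {d} {T : measurableType d} {R : realType}
  (P : probability T R) (h : R -> R) (G : set (set T)) (U : T -> R) : T -> R :=
  fun w => CE P G (h \o U) w - h (CE P G U w).

Definition Ecvar {d} {T : measurableType d} {R : realType}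
  (P : probability T R) (h : R -> R) (G : set (set T)) (U : T -> R) : \bar R :=
  'E_P[cvar P h G U].

(* Binned version of V w.r.t. the partition of [0,1] into the bins
   B_j = bin^{-1}(j): on {V in B_j}, it equals E[V | V in B_j]. *)
Definition binned {d} {T : measurableType d} {R : realType}
  (P : probability T R) (bin : R -> nat) (V : T -> R) : T -> R :=
  fun w =>
    let A := V @^-1` (bin @^-1` [set bin (V w)]) in
    fine (\int[P]_(x in A) (V x)%:E) / fine (P A).

Definition convex01 {R : realType} (h : R -> R) : Prop :=
  forall x y t : R, 0 <= x <= 1 -> 0 <= y <= 1 -> 0 <= t <= 1 ->
    h (t * x + (1 - t) * y) <= t * h x + (1 - t) * h y.

Definition hint {d} {T : measurableType d} {R : realType}
  (P : probability T R) (h : R -> R) (U : T -> R) : Prop :=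
  P.-integrable setT (EFin \o (h \o U)).

(* Main.v *)
Require Import Defs.
From HB Require Import structures.
From mathcomp Require Import all_boot all_order all_algebra.
From mathcomp Require Import all_classical all_reals all_analysis.
Import Order.TTheory GRing.Theory Num.Theory.
Local Open Scope classical_set_scope.
Local Open Scope ring_scope.
From mathcomp Require Import ring lra.
Section realana.
Context {R : realType}.
Implicit Types (h : R -> R).

Lemma three_slope {h p c q} : convex01 h -> 0 <= p -> p < c -> c < q -> q <= 1 ->
  (h c - h p) * (q - c) <= (h q - h c) * (c - p).
Proof.
move=> hc p0 pc cq q1.
have qp : 0 < q - p by rewrite subr_gt0 (lt_trans pc cq).
pose t := (q - c) / (q - p).
have t0 : 0 <= t by apply: divr_ge0; lra.
have t1 : t <= 1 by rewrite ler_pdivrMr // mul1r; lra.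
have tc : t * p + (1 - t) * q = c.
  by rewrite /t; field; exact: lt0r_neq0.
have := hc p q t.
rewrite tc; have p01 : 0 <= p <= 1 by apply/andP; split => //; lra.
have q01 : 0 <= q <= 1 by apply/andP; split => //; lra.
have t01 : 0 <= t <= 1 by apply/andP.
move=> /(_ p01 q01 t01) H.
have H2 : h c * (q - p) <= (q - c) * h p + (c - p) * h q.
  have := ler_wpM2r (ltW qp) H.
  have -> : (t * h p + (1 - t) * h q) * (q - p) = (q - c) * h p + (c - p) * h q.
    by rewrite /t; field; exact: lt0r_neq0.
  by [].
nra.
Qed.

Lemma slope_le {h p c q} : convex01 h -> 0 <= p -> p < c -> c < q -> q <= 1 ->
  (h c - h p) / (c - p) <= (h q - h c) / (q - c).
Proof.
move=> hc p0 pc cq q1.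
have cp : 0 < c - p by rewrite subr_gt0.
have qc : 0 < q - c by rewrite subr_gt0.
rewrite ler_pdivrMr // mulrAC ler_pdivlMr //.
have := three_slope hc p0 pc cq q1; lra.
Qed.

Lemma subgrad_ex {h c} : convex01 h -> 0 < c < 1 ->
  exists s, forall y, 0 <= y <= 1 -> h c + s * (y - c) <= h y.
Proof.
move=> hc /andP[c0 c1].
pose E := [set (h c - h p) / (c - p) | p in [set p | 0 <= p < c]].
have E0 : E !=set0 by exists ((h c - h 0) / (c - 0)); exists 0 => //=; rewrite lexx c0.
have Eub y : c < y -> y <= 1 -> ubound E ((h y - h c) / (y - c)).
  move=> cy y1 _ [p /andP[p0 pc] <-]; exact: slope_le.
have hub : has_ubound E by exists ((h 1 - h c) / (1 - c)); exact: Eub.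
exists (sup E) => y /andP[y0 y1].
have [yc|cy|->] := ltgtP y c; last by rewrite subrr mulr0 addr0.
- have : (h c - h y) / (c - y) <= sup E.
    by apply: ub_le_sup => //; exists y => //=; rewrite y0 yc.
  have cy : 0 < c - y by rewrite subr_gt0.
  rewrite ler_pdivrMr // => H; nra.
- have : sup E <= (h y - h c) / (y - c) by apply: ge_sup => //; exact: Eub.
  have yc : 0 < y - c by rewrite subr_gt0.
  rewrite ler_pdivlMr // => H; nra.
Qed.

Definition sg h (c : R) : R :=
  match pselect (exists s, forall y, 0 <= y <= 1 -> h c + s * (y - c) <= h y) with
  | left e => projT1 (cid e)
  | right _ => 0
  end.

Lemma sgP {h c} : convex01 h -> 0 < c < 1 ->
  forall y, 0 <= y <= 1 -> h c + sg h c * (y - c) <= h y.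
Proof.
move=> hc c01; rewrite /sg; case: pselect => [e|ne]; first exact: (projT2 (cid e)).
by exfalso; apply: ne; exact: subgrad_ex.
Qed.

End realana.
Section realana2.
Context {R : realType}.
Implicit Types (h : R -> R).

Lemma approx h x eps : convex01 h -> 0 < x < 1 -> 0 < eps ->
  exists n m : nat, 0 < (m%:R / n.+1%:R : R) < 1 /\
    h x - eps < h (m%:R / n.+1%:R) + sg h (m%:R / n.+1%:R) * (x - m%:R / n.+1%:R).
Proof.
move=> hc x01 e0; have /andP[x0 x1] := x01.
have [sx Hsx] := subgrad_ex hc x01.
pose N := `|h 1 - h x| + `|sx|.
have N0 : 0 <= N by rewrite addr_ge0.
pose B := 2 * N / (1 - x).
have x1' : 0 < 1 - x by rewrite subr_gt0.
have B0 : 0 <= B by rewrite divr_ge0 // ?mulr_ge0 // ltW.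
have BE : B * (1 - x) = 2 * N by rewrite /B; field; exact: lt0r_neq0.
pose M := `|sx| + B.
have M0 : 0 <= M by rewrite addr_ge0.
pose dl := Num.min (eps / (M + 1)) ((1 - x) / 2).
have dl1 : dl <= eps / (M + 1) by rewrite ge_min lexx.
have dl2 : dl <= (1 - x) / 2 by rewrite ge_min lexx orbT.
have dl0 : 0 < dl.
  by rewrite lt_min divr_gt0 //= ?divr_gt0 // ltr_wpDl.
have dlM : dl * M < eps.
  have : dl * (M + 1) <= eps by rewrite -ler_pdivlMr // ltr_wpDl.
  nra.
pose n := Num.trunc (dl^-1).
have [r [rE hn]] : exists r : R, r = n.+1%:R^-1 /\ r < dl.
  exists n.+1%:R^-1; split => //.
  rewrite invf_plt ?posrE ?ltr0n //; exact: truncnS_gt.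
pose k := Num.trunc (x * n.+1%:R).
have k1 : k%:R <= x * n.+1%:R by rewrite truncn_le mulr_ge0 // ltW.
have k2 : x * n.+1%:R < k.+1%:R by exact: truncnS_gt.
exists n, k.+1.
have np : 0 < n.+1%:R :> R by rewrite ltr0n.
have [c [cE cx cx2]] : exists c : R, [/\ c = k.+1%:R / n.+1%:R, x < c & c <= x + r].
  exists (k.+1%:R / n.+1%:R); split => //; first by rewrite ltr_pdivlMr.
  rewrite rE ler_pdivrMr // mulrDl mulVf ?lt0r_neq0 //.
  by rewrite -natr1; lra.
rewrite -cE.
clear k1 k2.
have dl3 : dl < 1 - x.
  apply: (le_lt_trans dl2); rewrite ltr_pdivrMr //; lra.
have c1 : c < 1 by lra.
have c01 : 0 < c < 1 by apply/andP; split => //; lra.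
split => //.
set s := sg h c.
have Hs := sgP hc c01.
have h1 : h x + sx * (c - x) <= h c by apply: Hsx; apply/andP; split; lra.
have h2 : h c + s * (1 - c) <= h 1 by apply: Hs; rewrite lexx ler01.
have aN1 : h 1 - h x <= `|h 1 - h x| by exact: ler_norm.
have aN2 : - `|sx| <= sx by rewrite lerNl -normrN ler_norm.
have aN3 : sx <= `|sx| by exact: ler_norm.
have sB : s <= B.
  have sN : s * (1 - c) <= N.
    have : sx * (c - x) >= - `|sx| by nra.
    rewrite /N; lra.
  have [s0|s0] := leP s 0; first lra.
  have : s * (1 - x) <= B * (1 - x) by rewrite BE; nra.
  by rewrite ler_pM2r.
have key : (c - x) * (s - sx) < eps.
  have : (c - x) * (s - sx) <= (c - x) * M.
    by apply: ler_wpM2l; [lra|rewrite /M; lra].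
  have : (c - x) * M <= dl * M by rewrite ler_wpM2r //; lra.
  lra.
nra.
Qed.

End realana2.
Section aux.
Context (R : realType) (d : measure_display) (T : measurableType d)
  (P : probability T R).

Definition good (G : set (set T)) := sigma_algebra setT G /\ G `<=` measurable.

Lemma goodT {G} : good G -> G setT.
Proof. by case=> [[G0 GC _] _]; have := GC set0 G0; rewrite setD0. Qed.

Definition Gm (G : set (set T)) (W : T -> R) :=
  measurable_fun (setT : set (g_sigma_algebraType G)) W.

Lemma GmP G W : sigma_algebra setT G ->
  (forall B : set R, measurable B -> G (W @^-1` B)) <-> Gm G W.
Proof.
move=> sG; split.
- by move=> h _ B mB; rewrite setTI; apply: sub_sigma_algebra; exact: h.
- move=> h B mB; have := h measurableT B mB; rewrite setTI.
  by rewrite /measurable /= (sigma_algebra_id sG).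
Qed.

Lemma CE_spec {G U} : cond_exp_exist P -> good G ->
  P.-integrable setT (EFin \o U) -> is_cond_exp P G U (CE P G U).
Proof.
move=> ex [sG GM] iU; rewrite /CE; case: pselect => [h|nh].
  exact: (projT2 (cid h)).
by exfalso; apply: nh; exact: ex.
Qed.

Local Open Scope ereal_scope.

Lemma G_I {G} {A B : set T} : sigma_algebra setT G -> G A -> G B -> G (A `&` B).
Proof.
move=> sG; rewrite -(measurable_g_measurableTypeE sG) => hA hB.
exact: measurableI.
Qed.

Lemma Gm_pos_E {G V E} : good G -> G E -> Gm G V -> P.-integrable setT (EFin \o V) ->
  (forall A, G A -> A `<=` E -> 0 <= \int[P]_(x in A) (V x)%:E) ->
  \forall x \ae P, E x -> (0 <= V x)%R.
Proof.
move=> [sG GM] GE0 mV iV hA.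
have GE n : G (E `&` V @^-1` `]-oo, (- n.+1%:R^-1)%R]).
  apply: G_I => //.
  by apply: (proj2 (GmP G V sG) mV); exact: measurable_itv.
have P0 n : P (E `&` V @^-1` `]-oo, (- n.+1%:R^-1)%R]) = 0.
  set F := _ `&` _.
  have mF : measurable F := GM _ (GE n).
  have h1 := hA _ (GE n) (@subIsetl _ _ _).
  have h2 : \int[P]_(x in F) (V x)%:E <= \int[P]_(x in F) (cst (- n.+1%:R^-1)%R%:E x).
    apply: le_integral => //.
    - exact: integrableS iV.
    - exact: (finite_measure_integrable_cst P).
    - move=> x /set_mem [_]; rewrite /= in_itv /= => hx.
      by rewrite lee_fin.
  rewrite integral_cst // in h2.
  have := le_trans h1 h2.
  rewrite EFinN mulNe oppe_ge0 pmule_rle0 ?lte_fin ?invr_gt0 ?ltr0n// => h.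
  by apply/eqP; rewrite eq_le h measure_ge0.
have : \forall x \ae P, forall n, ~ (E `&` V @^-1` `]-oo, (- n.+1%:R^-1)%R]) x.
  apply: ae_foralln => n.
  exists (E `&` V @^-1` `]-oo, (- n.+1%:R^-1)%R]); split; [exact: GM|exact: P0|].
  by move=> x /= /contrapT.
apply: filterS => x hx Ex; rewrite leNgt; apply/negP => Vx.
pose n := Num.trunc ((- V x)^-1)%R.
apply: (hx n); split => //; rewrite /= in_itv /=.
rewrite lerNr ltW // -invf_plt ?posrE ?oppr_gt0 ?ltr0n//.
exact: truncnS_gt.
Qed.

Lemma Gm_pos {G V} : good G -> Gm G V -> P.-integrable setT (EFin \o V) ->
  (forall A, G A -> 0 <= \int[P]_(x in A) (V x)%:E) ->
  \forall x \ae P, (0 <= V x)%R.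
Proof.
move=> gG mV iV hA.
have := Gm_pos_E gG (goodT gG) mV iV (fun A GA _ => hA A GA).
by apply: filterS => x; apply.
Qed.

Lemma int_subE {A} {W1 W2 : T -> R} : measurable A ->
  P.-integrable setT (EFin \o W1) -> P.-integrable setT (EFin \o W2) ->
  \int[P]_(x in A) (W1 x - W2 x)%R%:E =
  \int[P]_(x in A) (W1 x)%:E - \int[P]_(x in A) (W2 x)%:E.
Proof.
move=> mA i1 i2.
rewrite -(integralB_EFin mA (integrableS measurableT mA (subsetT _) i1)
  (integrableS measurableT mA (subsetT _) i2)).
by apply: eq_integral => x _; rewrite EFinB.
Qed.

Lemma integrable_subR {W1 W2 : T -> R} :
  P.-integrable setT (EFin \o W1) -> P.-integrable setT (EFin \o W2) ->
  P.-integrable setT (EFin \o (fun x => W1 x - W2 x)%R).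
Proof.
move=> i1 i2; apply: (eq_integrable _ ((EFin \o W1) \- (EFin \o W2))) => //.
exact: (integrableB measurableT i1 i2).
Qed.

Lemma Gm_sub {G} {W1 W2 : T -> R} : Gm G W1 -> Gm G W2 ->
  Gm G (fun x => W1 x - W2 x)%R.
Proof. move=> h1 h2; exact: measurable_realfun.measurable_funB. Qed.

Lemma version_int {G U W A} : is_cond_exp P G U W -> G A ->
  \int[P]_(x in A) (W x)%:E = \int[P]_(x in A) (U x)%:E.
Proof. by case=> _ _ h; exact: h. Qed.

Lemma version_Gm {G U W} : good G -> is_cond_exp P G U W -> Gm G W.
Proof. by move=> [sG _] [h _ _]; apply/GmP. Qed.

Lemma version_int1 {G U W} : is_cond_exp P G U W -> P.-integrable setT (EFin \o W).
Proof. by case. Qed.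

Lemma version_uniq G U W1 W2 : good G -> is_cond_exp P G U W1 ->
  is_cond_exp P G U W2 -> \forall x \ae P, W1 x = W2 x.
Proof.
move=> gG h1 h2.
have i1 := version_int1 h1; have i2 := version_int1 h2.
have m1 := version_Gm gG h1; have m2 := version_Gm gG h2.
have key (V1 V2 : T -> R) : Gm G V1 -> Gm G V2 ->
    P.-integrable setT (EFin \o V1) -> P.-integrable setT (EFin \o V2) ->
    (forall A, G A -> \int[P]_(x in A) (V1 x)%:E = \int[P]_(x in A) (V2 x)%:E) ->
    \forall x \ae P, (0 <= V1 x - V2 x)%R.
  move=> n1 n2 j1 j2 e; apply: (Gm_pos gG).
  - exact: Gm_sub.
  - exact: integrable_subR.
  - move=> A GA; rewrite int_subE //; last exact: gG.2.
    by rewrite e // subee // (integrable_fin_num _ (integrableS _ _ _ j2)) //; exact: gG.2.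
have e A : G A -> \int[P]_(x in A) (W1 x)%:E = \int[P]_(x in A) (W2 x)%:E.
  by move=> GA; rewrite (version_int h1 GA) (version_int h2 GA).
apply: filterS2 (key _ _ m1 m2 i1 i2 e) (key _ _ m2 m1 i2 i1 (fun A GA => esym (e A GA))).
by move=> x; rewrite !subr_ge0 => a b; apply/eqP; rewrite eq_le a b.
Qed.

Definition Hh (h : R -> R) (V : T -> R) := \int[P]_x (h (V x))%:E.

Lemma Hh_fin h V : hint P h V -> Hh h V \is a fin_num.
Proof. by move=> i; apply: integrable_fin_num. Qed.

Lemma Ecvar_E G h U : cond_exp_exist P -> good G -> hint P h U ->
  hint P h (CE P G U) -> Ecvar P h G U = Hh h U - Hh h (CE P G U).
Proof.
move=> ex gG iU iC; rewrite /Ecvar /cvar unlock /Hh.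
have hs := CE_spec ex gG iU.
rewrite (int_subE measurableT (version_int1 hs) iC).
by rewrite (version_int hs (goodT gG)).
Qed.

Lemma Hh_ae h V1 V2 : hint P h V1 -> hint P h V2 ->
  (\forall x \ae P, V1 x = V2 x) -> Hh h V1 = Hh h V2.
Proof.
move=> i1 i2 e; apply: ae_eq_integral => //.
- exact: measurable_int i1.
- exact: measurable_int i2.
- by apply: filterS e => x /= ->.
Qed.

Lemma tower G1 G2 U W2 : cond_exp_exist P -> good G1 -> good G2 ->
  G1 `<=` G2 -> P.-integrable setT (EFin \o U) -> is_cond_exp P G2 U W2 ->
  \forall x \ae P, CE P G1 W2 x = CE P G1 U x.
Proof.
move=> ex g1 g2 s12 iU h2.
apply: (@version_uniq G1 U _ _ g1); last exact: CE_spec.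
have [m i e] := CE_spec ex g1 (version_int1 h2).
split => // A GA; rewrite e //; exact: version_int h2 (s12 _ GA).
Qed.

Lemma ae_le_int {A} {f g : T -> R} : measurable A ->
  P.-integrable setT (EFin \o f) -> P.-integrable setT (EFin \o g) ->
  (\forall x \ae P, A x -> (f x <= g x)%R) ->
  \int[P]_(x in A) (f x)%:E <= \int[P]_(x in A) (g x)%:E.
Proof.
move=> mA i1 i2 [N [mN PN sub]].
have j1 := integrableS measurableT mA (subsetT _) i1.
have j2 := integrableS measurableT mA (subsetT _) i2.
rewrite (negligible_integral mN mA j1 PN) (negligible_integral mN mA j2 PN).
apply: le_integral; first exact: measurableD.
- exact: (integrableS mA (measurableD mA mN) (fun x (hx : (A `\` N) x) => hx.1) j1).
- exact: (integrableS mA (measurableD mA mN) (fun x (hx : (A `\` N) x) => hx.1) j2).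
move=> x /set_mem [Ax Nx]; rewrite lee_fin.
by apply: contrapT => fg; apply: Nx; apply: sub => /= H; exact: fg (H Ax).
Qed.


Lemma Gm_cst G (r : R) : Gm G (fun _ => r).
Proof. exact: measurable_cst. Qed.

Lemma int_cst (r : R) : P.-integrable setT (EFin \o (fun _ : T => r)).
Proof. exact: (finite_measure_integrable_cst P). Qed.

Lemma ae_int_ge0 {A} {g : T -> R} : measurable A ->
  P.-integrable setT (EFin \o g) -> (\forall x \ae P, A x -> (0 <= g x)%R) ->
  0 <= \int[P]_(x in A) (g x)%:E.
Proof.
move=> mA ig ae; have := ae_le_int mA (int_cst 0) ig ae.
by rewrite integral0_eq.
Qed.

Lemma version_01 {G U W} : good G -> P.-integrable setT (EFin \o U) ->
  (\forall x \ae P, (0 <= U x <= 1)%R) ->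
  is_cond_exp P G U W -> \forall x \ae P, (0 <= W x <= 1)%R.
Proof.
move=> gG iU U01 hW.
have iW := version_int1 hW.
have i1 := int_cst 1.
have A0 : \forall x \ae P, (0 <= W x)%R.
  apply: (Gm_pos gG (version_Gm gG hW) iW) => A GA.
  rewrite (version_int hW GA); apply: ae_int_ge0 (gG.2 _ GA) iU _.
  by apply: filterS U01 => x /andP[? _] _.
have A1 : \forall x \ae P, (0 <= 1 - W x)%R.
  apply: (Gm_pos gG (Gm_sub (Gm_cst G 1) (version_Gm gG hW)) (integrable_subR i1 iW)).
  move=> A GA; have mA := gG.2 _ GA.
  rewrite (int_subE mA i1 iW) (version_int hW GA) -(int_subE mA i1 iU).
  apply: ae_int_ge0 mA (integrable_subR i1 iU) _.
  by apply: filterS U01 => x /andP[_ ?] _; rewrite subr_ge0.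
by apply: filterS2 A0 A1 => x a b; rewrite a /= -subr_ge0.
Qed.

Lemma int_aff (a b : R) {V : T -> R} : P.-integrable setT (EFin \o V) ->
  P.-integrable setT (EFin \o (fun x => a + b * V x)%R).
Proof.
move=> iV.
apply: (eq_integrable measurableT ((EFin \o cst a) \+ (fun x => b%:E * (V x)%:E))).
  by move=> x _ /=.
apply: integrableD => //; first exact: (finite_measure_integrable_cst P).
exact: integrableZl.
Qed.

Lemma int_affE {A} (a b : R) {V : T -> R} : measurable A ->
  P.-integrable setT (EFin \o V) ->
  \int[P]_(x in A) (a + b * V x)%R%:E = a%:E * P A + b%:E * \int[P]_(x in A) (V x)%:E.
Proof.
move=> mA iV.
have iVA := integrableS measurableT mA (subsetT _) iV.
have ibV : P.-integrable A (EFin \o (fun x => b * V x)%R).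
  apply: (eq_integrable mA (fun x => b%:E * (V x)%:E)) => //.
  exact: integrableZl.
transitivity (\int[P]_(x in A) ((EFin \o cst a) x + (EFin \o (fun x => b * V x)%R) x)).
  by apply: eq_integral.
rewrite integralD_EFin //; last exact: (finite_measure_integrable_cst P).
congr (_ + _).
  transitivity (\int[P]_(x in A) (cst a%:E x)); first by apply: eq_integral.
  exact: integral_cst.
rewrite -integralZl //; apply: eq_integral => x _ //.
Qed.

Lemma Gm_aff {G} (a b : R) {W : T -> R} : Gm G W -> Gm G (fun x => a + b * W x)%R.
Proof.
move=> mW.
apply: measurable_realfun.measurable_funD; first exact: measurable_cst.
by apply: measurable_realfun.measurable_funM => //; exact: measurable_cst.
Qed.

Lemma aff_version {G U W} (a b : R) : good G -> P.-integrable setT (EFin \o U) ->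
  is_cond_exp P G U W ->
  is_cond_exp P G (fun x => a + b * U x)%R (fun x => a + b * W x)%R.
Proof.
move=> gG iU hW; split.
- apply/(GmP _ _ gG.1); exact: Gm_aff (version_Gm gG hW).
- exact: int_aff (version_int1 hW).
- move=> A GA; have mA := gG.2 _ GA.
  by rewrite !int_affE // ?(version_int hW GA) //; exact: version_int1 hW.
Qed.

Lemma cmp {G E U1 W1 U2 W2} : good G -> G E ->
  P.-integrable setT (EFin \o U1) -> P.-integrable setT (EFin \o U2) ->
  is_cond_exp P G U1 W1 -> is_cond_exp P G U2 W2 ->
  (\forall x \ae P, E x -> (U1 x <= U2 x)%R) ->
  \forall x \ae P, E x -> (W1 x <= W2 x)%R.
Proof.
move=> gG GE i1 i2 h1 h2 ae.
have j1 := version_int1 h1; have j2 := version_int1 h2.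
have H : forall A, G A -> A `<=` E ->
    0 <= \int[P]_(x in A) ((fun x => W2 x - W1 x)%R x)%:E.
  move=> A GA AE; have mA := gG.2 _ GA.
  rewrite (int_subE mA j2 j1) (version_int h2 GA) (version_int h1 GA) -(int_subE mA i2 i1).
  apply: ae_int_ge0 mA (integrable_subR i2 i1) _.
  by apply: filterS ae => x HH Ax; rewrite subr_ge0; apply: HH; exact: AE.
have := Gm_pos_E gG GE (Gm_sub (version_Gm gG h2) (version_Gm gG h1))
  (integrable_subR j2 j1) H.
by apply: filterS => x HH Ex; rewrite -subr_ge0; exact: HH Ex.
Qed.

Lemma zero_on {G U W} : good G -> P.-integrable setT (EFin \o U) ->
  (\forall x \ae P, (0 <= U x)%R) -> is_cond_exp P G U W ->
  \forall x \ae P, W x = 0%R -> U x = 0%R.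
Proof.
move=> gG iU U0 hW.
pose E := W @^-1` [set 0%R].
have GE : G E.
  by apply: (proj2 (GmP G W gG.1) (version_Gm gG hW)); exact: measurable_set1.
have mE := gG.2 _ GE.
have mU := measurable_funS measurableT (subsetT E) (measurable_int _ iU).
have I0 : \int[P]_(x in E) `|(EFin \o U) x| = 0.
  transitivity (\int[P]_(x in E) (U x)%:E).
    apply: ae_eq_integral => //.
    - exact: measurable_funS (measurable_int _ (integrable_abse iU)).
    - by apply: filterS U0 => x H _ /=; rewrite ger0_norm.
  rewrite -(version_int hW GE); apply: integral0_eq => x /= ->; by [].
have := (ae_eq_integral_abs _ mE mU).1 I0.
apply: filterS => x H Ex.
exact: (congr1 fine (H Ex)).
Qed.

Lemma ae_and {A B : T -> Prop} : (\forall x \ae P, A x) -> (\forall x \ae P, B x) ->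
  \forall x \ae P, A x /\ B x.
Proof. by move=> a b; apply: filterS2 a b => x ? ?; split. Qed.

Lemma jensen G h U W : cond_exp_exist P -> good G -> convex01 h ->
  P.-integrable setT (EFin \o U) -> (\forall x \ae P, (0 <= U x <= 1)%R) ->
  is_cond_exp P G U W -> hint P h U -> hint P h W -> Hh h W <= Hh h U.
Proof.
move=> ex gG hc iU U01 hW hU hhW.
have iW := version_int1 hW.
have W01 := version_01 gG iU U01 hW.
have hZ := CE_spec ex gG hU.
set Z := CE P G (h \o U) in hZ *.
have iZ := version_int1 hZ.
have L n m : \forall x \ae P, (0 < (m%:R / n.+1%:R : R) < 1)%R ->
    (h (m%:R / n.+1%:R) + sg h (m%:R / n.+1%:R) * (W x - m%:R / n.+1%:R) <= Z x)%R.
  set c : R := (m%:R / n.+1%:R)%R.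
  have [c01|nc01] := boolP (0 < c < 1)%R; last by apply: aeW => x.
  pose a := (h c - sg h c * c)%R.
  have cond : \forall x \ae P, setT x -> (a + sg h c * U x <= (h \o U) x)%R.
    apply: filterS U01 => x Ux _ /=; have := sgP hc c01 (U x) Ux.
    by rewrite /a (_ : h c - sg h c * c + sg h c * U x = h c + sg h c * (U x - c))%R //; ring.
  have := cmp gG (goodT gG) (int_aff a (sg h c) iU) hU
    (aff_version a (sg h c) gG iU hW) hZ cond.
  apply: filterS => x H _; have := H I.
  by rewrite /a (_ : h c - sg h c * c + sg h c * W x = h c + sg h c * (W x - c))%R //; ring.
have Lall : \forall x \ae P, forall n m, (0 < (m%:R / n.+1%:R : R) < 1)%R ->
    (h (m%:R / n.+1%:R) + sg h (m%:R / n.+1%:R) * (W x - m%:R / n.+1%:R) <= Z x)%R.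
  by apply: ae_foralln => n; apply: ae_foralln => m; exact: L.
have U0 : \forall x \ae P, (0 <= U x)%R by apply: filterS U01 => x /andP[].
have z0 := zero_on gG iU U0 hW.
have z1 : \forall x \ae P, W x = 1%R -> U x = 1%R.
  have U0' : \forall x \ae P, (0 <= 1 + -1 * U x)%R.
    by apply: filterS U01 => x /andP[_]; rewrite mulN1r subr_ge0.
  have := zero_on gG (int_aff 1 (-1) iU) U0' (aff_version 1 (-1) gG iU hW).
  apply: filterS => x H Wx.
  have := H; rewrite Wx mulN1r subrr => /(_ erefl) /eqP.
  by rewrite mulN1r subr_eq0 => /eqP <-.
have ep (w0 : R) : (\forall x \ae P, W x = w0 -> U x = w0) ->
    \forall x \ae P, W x = w0 -> (h w0 <= Z x)%R.
  move=> zw.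
  have GE : G (W @^-1` [set w0]).
    by apply: (proj2 (GmP G W gG.1) (version_Gm gG hW)); exact: measurable_set1.
  have cond : \forall x \ae P, (W @^-1` [set w0]) x -> (h w0 + 0 * U x <= (h \o U) x)%R.
    by apply: filterS zw => x H Ex /=; rewrite (H Ex) mul0r addr0.
  have := cmp gG GE (int_aff (h w0) 0 iU) hU (aff_version (h w0) 0 gG iU hW) hZ cond.
  by apply: filterS => x H Ex; have := H Ex; rewrite mul0r addr0.
have e0 := ep 0%R z0.
have e1 := ep 1%R z1.
have key : \forall x \ae P, setT x -> (h (W x) <= Z x)%R.
  have A1 := ae_and W01 Lall.
  have A2 := ae_and A1 e0.
  have A3 := ae_and A2 e1.
  apply: filterS A3 => x [[[/andP[w0 w1] Lx] e0x] e1x] _.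
  have [Wx0|Wx0] := eqVneq (W x) 0%R; first by rewrite Wx0; exact: e0x.
  have [Wx1|Wx1] := eqVneq (W x) 1%R; first by rewrite Wx1; exact: e1x.
  have Wx01 : (0 < W x < 1)%R by rewrite !lt_neqAle w0 w1 eq_sym Wx0 Wx1.
  rewrite leNgt; apply/negP => hZW.
  have ep0 : (0 < h (W x) - Z x)%R by rewrite subr_gt0.
  have [n [m [c01 Hc]]] := approx h (W x) (h (W x) - Z x)%R hc Wx01 ep0.
  have K := lt_le_trans Hc (Lx n m c01).
  by move: K; rewrite opprB addrCA subrr addr0 ltxx.
apply: le_trans (ae_le_int measurableT hhW iZ key) _.
by rewrite (version_int hZ (goodT gG)).
Qed.

Lemma good_sigma_of {d'} {T' : measurableType d'} (V : T -> T') :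
  measurable_fun setT V -> good (sigma_of V).
Proof.
move=> mV; split; first exact/sigma_algebra_preimage/sigma_algebra_measurable.
by move=> _ [B mB <-]; exact: mV.
Qed.

Lemma sigma_of_comp {d' d''} {T' : measurableType d'} {T'' : measurableType d''}
  (V : T -> T') (g : T' -> T'') :
  measurable_fun setT g -> sigma_of (g \o V) `<=` sigma_of V.
Proof. exact: preimage_set_system_compS. Qed.

Lemma sum_fin (K : nat) (F x y : 'I_K -> \bar R) :
  (forall k, F k = x k - y k) -> (forall k, x k \is a fin_num) ->
  (forall k, y k \is a fin_num) ->
  \sum_(k < K) F k = (\sum_(k < K) (fine (x k) - fine (y k)))%:E.
Proof.
move=> e fx fy; rewrite -sumEFin; apply: eq_bigr => k _.
by rewrite EFinB !fineK // e.
Qed.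

Local Close Scope ereal_scope.

Lemma arith1 (K : nat) (a c s : 'I_K -> R) :
  (\sum_(k < K) (a k - c k))%:E =
  ((\sum_(k < K) (s k - c k))%:E + (\sum_(k < K) (a k - s k))%:E)%E.
Proof.
rewrite -EFinD -big_split /=; congr EFin; apply: eq_bigr => k _ /=; ring.
Qed.

Lemma arith3 (K : nat) (a c e g : 'I_K -> R) :
  (\sum_(k < K) (a k - c k))%:E =
  ((\sum_(k < K) (g k - e k))%:E - (\sum_(k < K) (c k - e k))%:E
    + (\sum_(k < K) (a k - g k))%:E)%E.
Proof.
rewrite -EFinB -EFinD -sumrB -big_split /=; congr EFin.
apply: eq_bigr => k _ /=; ring.
Qed.

Lemma arith4 (K : nat) (a c s e g : 'I_K -> R) :
  (forall k, s k <= a k) -> (forall k, c k <= s k) ->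
  (forall k, e k <= c k) -> (forall k, g k <= a k) ->
  [/\ ((\sum_(k < K) (s k - c k))%:E <= (\sum_(k < K) (a k - c k))%:E)%E,
      (0 <= (\sum_(k < K) (s k - c k))%:E)%E,
      (0 <= (\sum_(k < K) (c k - e k))%:E)%E
    & ((\sum_(k < K) (g k - e k))%:E - (\sum_(k < K) (c k - e k))%:E
        <= (\sum_(k < K) (a k - c k))%:E)%E].
Proof.
move=> h1 h2 h3 h4; split; rewrite ?lee_fin.
- by apply: ler_sum => k _; rewrite lerB.
- by apply: sumr_ge0 => k _; rewrite subr_ge0.
- by apply: sumr_ge0 => k _; rewrite subr_ge0.
- rewrite -sumrB; apply: ler_sum => k _.
  have := h4 k; lra.
Qed.

Lemma arith2 (K : nat) (a c e : 'I_K -> R) :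
  (\sum_(k < K) (a k - e k))%:E =
  ((\sum_(k < K) (a k - c k))%:E + (\sum_(k < K) (c k - e k))%:E)%E.
Proof.
rewrite -EFinD -big_split /=; congr EFin; apply: eq_bigr => k _ /=; ring.
Qed.
End aux.
Arguments good {d T}.
Arguments Gm {R d T}.
Arguments Hh {R d T}.
Arguments good_sigma_of {d T d' T' V}.
Arguments sigma_of_comp {d T d' d'' T' T''}.
Arguments CE_spec {R d T P G U}.
Arguments version_int1 {R d T P G U W}.
Arguments Ecvar_E {R d T P G h U}.
Arguments Hh_ae {R d T P h V1 V2}.
Arguments Hh_fin {R d T P h V}.
Arguments tower {R d T P G1 G2 U W2}.
Arguments sum_fin {R}.
Arguments version_01 {R d T P G U W}.
Arguments jensen {R d T P G h U W}.
Arguments arith1 {R K}.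
Arguments arith3 {R K}.
Arguments arith4 {R K}.
Arguments arith2 {R K}.
Theorem theorem3 (R : realType) (d : measure_display) (T : measurableType d)
  (P : probability T R)
  (dX : measure_display) (Xsp : measurableType dX) (X : T -> Xsp)
  (K : nat) (Y : T -> 'I_K)
  (f : 'I_K -> Xsp -> R) (phi : ('I_K -> R) -> 'I_K -> R)
  (h : 'I_K -> R -> R) (Rpart : 'I_K -> Xsp -> nat) (bin : 'I_K -> R -> nat) :
  measurable_fun setT X ->
  (forall k, measurable (Y @^-1` [set k])) ->
  (forall k, measurable_fun setT (f k)) ->
  (forall x, (forall k, 0 <= f k x) /\ \sum_(k < K) f k x = 1) ->
  (forall k, measurable_fun setT (Rpart k)) ->
  (forall k, measurable_fun setT (bin k)) ->
  cond_exp_exist P ->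
  let S k := f k \o X in
  let Q k := CE P (sigma_of X) (fun w => (Y w == k)%:R) in
  let C k := CE P (sigma_of (S k)) (Q k) in
  let SB k := binned P (bin k) (S k) in
  let sigSR k := sigma_of (fun w => (S k w, Rpart k (X w))) in
  let sigSBR k := sigma_of (fun w => (SB k w, Rpart k (X w))) in
  let DS k := CE P (sigSR k) (Q k) in
  let DB k := CE P (sigSBR k) (Q k) in
  let dphi w := \sum_(k < K) phi (fun j => C j w) k * Q k w
              - \sum_(k < K) phi (fun j => Q j w) k * Q k w in
  let GL_S := ('E_P[dphi])%E in
  P.-integrable setT (EFin \o dphi) ->
  (forall k, hint P (h k) (Q k) /\ hint P (h k) (C k) /\
             hint P (h k) (DS k) /\ hint P (h k) (CE P (sigma_of (S k)) (DS k)) /\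
             hint P (h k) (CE P (sigma_of (SB k)) (Q k)) /\
             hint P (h k) (CE P (sigma_of (SB k)) (C k)) /\
             hint P (h k) (DB k) /\ hint P (h k) (CE P (sigma_of (SB k)) (DB k))) ->
  GL_S = (\sum_(k < K) Ecvar P (h k) (sigma_of (S k)) (Q k))%E ->
  let GL_SB := (\sum_(k < K) Ecvar P (h k) (sigma_of (SB k)) (Q k))%E in
  let expl_S := (\sum_(k < K) Ecvar P (h k) (sigma_of (S k)) (DS k))%E in
  let res_S := (\sum_(k < K) Ecvar P (h k) (sigSR k) (Q k))%E in
  let expl_SB := (\sum_(k < K) Ecvar P (h k) (sigma_of (SB k)) (DB k))%E in
  let res_SB := (\sum_(k < K) Ecvar P (h k) (sigSBR k) (Q k))%E in
  let induced := (\sum_(k < K) Ecvar P (h k) (sigma_of (SB k)) (C k))%E in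
  [/\ GL_S = (expl_S + res_S)%E,
      GL_SB = (GL_S + induced)%E,
      GL_S = (expl_SB - induced + res_SB)%E
    & (forall k, convex01 (h k)) ->
      [/\ (expl_S <= GL_S)%E, (0 <= expl_S)%E, (0 <= induced)%E
        & (expl_SB - induced <= GL_S)%E]].
Proof.
move=> mX mY mf fsum mR mbin ex S Q C SB sigSR sigSBR DS DB dphi GL_S idphi
  hints HGL GL_SB expl_S res_S expl_SB res_SB induced.
have mS k : measurable_fun setT (S k) := measurableT_comp (mf k) mX.
have mRX k : measurable_fun setT (fun w => Rpart k (X w)) :=
  measurableT_comp (mR k) mX.
pose cb k n := fine (\int[P]_(x in S k @^-1` (bin k @^-1` [set n])) (S k x)%:E)
  / fine (P (S k @^-1` (bin k @^-1` [set n]))).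
have SBE k : SB k = (cb k \o bin k) \o S k by [].
have mcb k : measurable_fun setT (cb k \o bin k).
  by apply: measurableT_comp (mbin k).
have mSB k : measurable_fun setT (SB k) by rewrite SBE; exact: measurableT_comp.
have gX : good (sigma_of X) := good_sigma_of mX.
have gS k : good (sigma_of (S k)) := good_sigma_of (mS k).
have gSB k : good (sigma_of (SB k)) := good_sigma_of (mSB k).
have gSR k : good (sigSR k) := good_sigma_of (measurable_fun_pair (mS k) (mRX k)).
have gSBR k : good (sigSBR k) :=
  good_sigma_of (measurable_fun_pair (mSB k) (mRX k)).
have iSB_S k : sigma_of (SB k) `<=` sigma_of (S k).
  by rewrite SBE; exact: sigma_of_comp.
have iS_SR k : sigma_of (S k) `<=` sigSR k.
  have := sigma_of_comp (fun w => (S k w, Rpart k (X w))) fst measurable_fst.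
  exact.
have iSB_SBR k : sigma_of (SB k) `<=` sigSBR k.
  have := sigma_of_comp (fun w => (SB k w, Rpart k (X w))) fst measurable_fst.
  exact.
have iI k : P.-integrable setT (EFin \o (fun w => (Y w == k)%:R)).
  apply: (eq_integrable measurableT (fun x => (\1_(Y @^-1` [set k]) x)%:E)); last first.
    exact: integrable_indic.
  move=> x _ /=; rewrite indicE.
  have -> : (x \in Y @^-1` [set k]) = (Y x == k).
    by apply/idP/eqP => [/set_mem /= //|<-]; exact/mem_set.
  by [].
have vQ k := CE_spec ex gX (iI k).
have iQ k := version_int1 (vQ k).
have vC k : is_cond_exp P (sigma_of (S k)) (Q k) (C k) := CE_spec ex (gS k) (iQ k).
have vDS k : is_cond_exp P (sigSR k) (Q k) (DS k) := CE_spec ex (gSR k) (iQ k).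
have vDB k : is_cond_exp P (sigSBR k) (Q k) (DB k) := CE_spec ex (gSBR k) (iQ k).
have iC k := version_int1 (vC k).
have hQ k := (hints k).1.
have hC k := (hints k).2.1.
have hDS k := (hints k).2.2.1.
have hSDS k := (hints k).2.2.2.1.
have hSBQ k := (hints k).2.2.2.2.1.
have hSBC k := (hints k).2.2.2.2.2.1.
have hDB k := (hints k).2.2.2.2.2.2.1.
have hSBDB k := (hints k).2.2.2.2.2.2.2.
have T1 k : Hh P (h k) (CE P (sigma_of (S k)) (DS k)) = Hh P (h k) (C k).
  exact: Hh_ae (hSDS k) (hC k) (tower ex (gS k) (gSR k) (iS_SR k) (iQ k) (vDS k)).
have T2 k : Hh P (h k) (CE P (sigma_of (SB k)) (DB k)) =
            Hh P (h k) (CE P (sigma_of (SB k)) (Q k)).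
  exact: Hh_ae (hSBDB k) (hSBQ k) (tower ex (gSB k) (gSBR k) (iSB_SBR k) (iQ k) (vDB k)).
have T3 k : Hh P (h k) (CE P (sigma_of (SB k)) (C k)) =
            Hh P (h k) (CE P (sigma_of (SB k)) (Q k)).
  exact: Hh_ae (hSBC k) (hSBQ k) (tower ex (gSB k) (gS k) (iSB_S k) (iQ k) (vC k)).
have E1 k := Ecvar_E ex (gS k) (hQ k) (hC k).
have E2 k : Ecvar P (h k) (sigma_of (S k)) (DS k) = (Hh P (h k) (DS k) - Hh P (h k) (C k))%E.
  by rewrite (Ecvar_E ex (gS k) (hDS k) (hSDS k)) T1.
have E3 k := Ecvar_E ex (gSR k) (hQ k) (hDS k).
have E4 k := Ecvar_E ex (gSB k) (hQ k) (hSBQ k).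
have E5 k : Ecvar P (h k) (sigma_of (SB k)) (DB k) =
    (Hh P (h k) (DB k) - Hh P (h k) (CE P (sigma_of (SB k)) (Q k)))%E.
  by rewrite (Ecvar_E ex (gSB k) (hDB k) (hSBDB k)) T2.
have E6 k := Ecvar_E ex (gSBR k) (hQ k) (hDB k).
have E7 k : Ecvar P (h k) (sigma_of (SB k)) (C k) =
    (Hh P (h k) (C k) - Hh P (h k) (CE P (sigma_of (SB k)) (Q k)))%E.
  by rewrite (Ecvar_E ex (gSB k) (hC k) (hSBC k)) T3.
have F1 := sum_fin _ _ _ _ E1 (fun k => Hh_fin (hQ k)) (fun k => Hh_fin (hC k)).
have F2 := sum_fin _ _ _ _ E2 (fun k => Hh_fin (hDS k)) (fun k => Hh_fin (hC k)).
have F3 := sum_fin _ _ _ _ E3 (fun k => Hh_fin (hQ k)) (fun k => Hh_fin (hDS k)).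
have F4 := sum_fin _ _ _ _ E4 (fun k => Hh_fin (hQ k)) (fun k => Hh_fin (hSBQ k)).
have F5 := sum_fin _ _ _ _ E5 (fun k => Hh_fin (hDB k)) (fun k => Hh_fin (hSBQ k)).
have F6 := sum_fin _ _ _ _ E6 (fun k => Hh_fin (hQ k)) (fun k => Hh_fin (hDB k)).
have F7 := sum_fin _ _ _ _ E7 (fun k => Hh_fin (hC k)) (fun k => Hh_fin (hSBQ k)).
rewrite /GL_SB /expl_S /res_S /expl_SB /res_SB /induced HGL F1 F2 F3 F4 F5 F6 F7.
pose a k := fine (Hh P (h k) (Q k)).
pose c k := fine (Hh P (h k) (C k)).
pose s k := fine (Hh P (h k) (DS k)).
pose e k := fine (Hh P (h k) (CE P (sigma_of (SB k)) (Q k))).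
pose g k := fine (Hh P (h k) (DB k)).
split.
- exact: (arith1 a c s).
- exact: (arith2 a c e).
- exact: (arith3 a c e g).
move=> hconv.
have Q01 k : \forall x \ae P, (0 <= Q k x <= 1)%R.
  apply: (version_01 gX (iI k) _ (vQ k)); apply: aeW => x.
  by case: (_ == _); rewrite /= ?lexx ?ler01.
have J1 k : (s k <= a k)%R.
  apply: fine_le; [exact: Hh_fin|exact: Hh_fin|].
  exact: jensen ex (gSR k) (hconv k) (iQ k) (Q01 k) (vDS k) (hQ k) (hDS k).
have J2 k : (c k <= s k)%R.
  have iDS := version_int1 (vDS k).
  have DS01 := version_01 (gSR k) (iQ k) (Q01 k) (vDS k).
  have := jensen ex (gS k) (hconv k) iDS DS01 (CE_spec ex (gS k) iDS) (hDS k) (hSDS k).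
  rewrite T1 => J; apply: fine_le; [exact: Hh_fin|exact: Hh_fin|exact: J].
have J3 k : (e k <= c k)%R.
  have C01 := version_01 (gS k) (iQ k) (Q01 k) (vC k).
  have := jensen ex (gSB k) (hconv k) (iC k) C01 (CE_spec ex (gSB k) (iC k)) (hC k) (hSBC k).
  rewrite T3 => J; apply: fine_le; [exact: Hh_fin|exact: Hh_fin|exact: J].
have J4 k : (g k <= a k)%R.
  apply: fine_le; [exact: Hh_fin|exact: Hh_fin|].
  exact: jensen ex (gSBR k) (hconv k) (iQ k) (Q01 k) (vDB k) (hQ k) (hDB k).
exact: (arith4 a c s e g J1 J2 J3 J4).
Qed.
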